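(* Let $\ell,n,d_0\in\mathbb{N}$ and $d=d_0+2\ell$. Let $X\in\{-1,1\}^{n\times d_0}$, let $\mathbf{P}$ be a uniformly random $d\times d$ permutation matrix, and let $\mathbf{Y}=\mathsf{PAP}_{n,d_0,\ell}(X,\mathbf{P})$. Let $\mathsf{M}\colon\{-1,1\}^{n\times d}\to[-1,1]^d$ be a mechanism such that for every $Y$ in the support of $\mathbf{Y}$, $\mathsf{M}(Y)$ strongly-agrees with $Y$ (with probability 1). Then the random vector $(\mathsf{M}(\mathbf{Y})\cdot\mathbf{P}^T)^{1,\dots,d_0}$ (the first $d_0$ coordinates of the row vector $\mathsf{M}(\mathbf{Y})\mathbf{P}^T$) is strongly-correlated with $X$.
   Context: $\mathsf{PAP}_{n,d_0,\ell}(X,P)=X''\cdot P$, where $X''\in\{-1,1\}^{n\times d}$ is obtained from $X$ by appending $\ell$ columns with all entries $1$ and $\ell$ columns with all entries $-1$ (after the $d_0$ original columns), and $P$ is a $d\times d$ permutation matrix (permuting columns). For a matrix $Z$ and $b\in\{-1,1\}$, $\mathcal{J}_Z^b$ is the set of columns all of whose entries equal $b$. A vector $q$ strongly-agrees with $Z$ if for both $b$, $|\{j\in\mathcal{J}_Z^b:q^j=b\}|\ge0.9|\mathcal{J}_Z^b|$. A random vector $Q\in[-1,1]^{d_0}$ is strongly-correlated with $X$ if for all $b\in\{-1,1\}$ and $j\in\mathcal{J}_X^b$, $\Pr[Q^j=b]\ge0.9$ (probability over $\mathbf{P}$ and $\mathsf{M}$'s coins). *)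

(* Defs.v *)
From HB Require Import structures.
From mathcomp Require Import all_boot all_order all_algebra all_fingroup.
From mathcomp Require Import all_classical all_reals all_analysis.
Set Implicit Arguments. Unset Strict Implicit. Unset Printing Implicit Defensive.
Import Order.TTheory GRing.Theory Num.Theory.
Local Open Scope ring_scope.

Definition pm1_mx (R : numDomainType) m k (Z : 'M[R]_(m, k)) : Prop :=
  forall i j, Z i j = 1 \/ Z i j = -1.

Definition pad_mx (R : numDomainType) n d0 l (X : 'M[R]_(n, d0))
  : 'M[R]_(n, d0 + (l + l)) :=
  row_mx X (row_mx (const_mx 1) (const_mx (-1))).

Definition PAP (R : numDomainType) n d0 l (X : 'M[R]_(n, d0))
  (s : 'S_(d0 + (l + l))) : 'M[R]_(n, d0 + (l + l)) :=
  pad_mx l X *m perm_mx s.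

Definition Jcols (R : numDomainType) m k (Z : 'M[R]_(m, k)) (b : R) : {set 'I_k} :=
  [set j | [forall i, Z i j == b]].

Definition strongly_agrees (R : numFieldType) m k (q : 'rV[R]_k) (Z : 'M[R]_(m, k))
  : Prop :=
  forall b : R, (b = 1 \/ b = -1) ->
    (9 / 10 : R) * (#|Jcols Z b|)%:R <= (#|[set j in Jcols Z b | q ord0 j == b]|)%:R :> R.

(* Main.v *)
Require Import Defs.
From HB Require Import structures.
From mathcomp Require Import all_boot all_order all_algebra all_fingroup.
From mathcomp Require Import all_classical all_reals all_analysis.
From mathcomp Require Import measurable_realfun.
Import Order.TTheory GRing.Theory Num.Theory.
Local Open Scope ring_scope.
Local Open Scope classical_set_scope.
Lemma bigU_mem (T : Type) (I : eqType) (r : seq I) (P : pred I) (F : I -> set T) w :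
  (\big[setU/set0]_(i <- r | P i) F i) w <-> exists i, [/\ i \in r, P i & F i w].
Proof.
elim: r => [|a r IH]; first by rewrite big_nil; split => // -[i []].
rewrite big_cons; case: ifP => Pa.
  split.
    case => [Fa|/IH [i [ir Pi Fi]]]; first by exists a; rewrite inE eqxx.
    by exists i; rewrite inE ir orbT.
  case => i []; rewrite inE => /orP [/eqP ->|ir] Pi Fi; first by left.
  by right; apply/IH; exists i.
split; first by move/IH => [i [ir Pi Fi]]; exists i; rewrite inE ir orbT.
case => i []; rewrite inE => /orP [/eqP ->|ir] Pi Fi; first by rewrite Pi in Pa.
by apply/IH; exists i.
Qed.

Lemma bigI_mem (T : Type) (I : eqType) (r : seq I) (F : I -> set T) w :
  (\big[setI/setT]_(i <- r) F i) w <-> forall i, i \in r -> F i w.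
Proof.
elim: r => [|a r IH]; first by rewrite big_nil.
rewrite big_cons; split.
  by case => Fa /IH H i; rewrite inE => /orP [/eqP ->|/H].
by move=> H; split; [apply: H; rewrite inE eqxx | apply/IH => i ir; apply: H; rewrite inE ir orbT].
Qed.

Lemma fin_pattern_measurable d (Om : measurableType d) (T : finType)
  (f : T -> Om -> bool) (mf : forall t, measurable [set w | f t w])
  (Q : {ffun T -> bool} -> Prop) :
  measurable [set w | Q [ffun t => f t w]].
Proof.
have -> : [set w | Q [ffun t => f t w]] =
  \big[setU/set0]_(g <- enum {ffun T -> bool} | `[< Q g >])
     \big[setI/setT]_(t <- enum T) [set w | f t w = g t].
  apply/seteqP; split => w.
    move=> Qw; apply/bigU_mem; exists [ffun t => f t w]; split.
    - by rewrite mem_enum.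
    - by apply/asboolP.
    - by apply/bigI_mem => t _; rewrite ffunE.
  move/bigU_mem => [g [_ /asboolP Qg /bigI_mem H]].
  suff E : [ffun t => f t w] = g by rewrite /= E.
  by apply/ffunP => t; rewrite ffunE H // mem_enum.
apply: bigsetU_measurable => g _; apply: bigsetI_measurable => t _.
case: (g t).
  by apply: mf.
have -> : [set w | f t w = false] = ~` [set w | f t w].
  by apply/seteqP; split => w /=; [move=> -> | move/negP/negbTE].
exact: measurableC.
Qed.
Lemma mul_perm_entry (R : pzSemiRingType) m k (A : 'M[R]_(m, k)) (s : 'S_k) i c :
  (A *m perm_mx s) i (s c) = A i c.
Proof. by rewrite -[s in perm_mx s]invgK -col_permE mxE permK. Qed.

Lemma mul_trperm_entry (R : pzSemiRingType) k (q : 'rV[R]_k) (s : 'S_k) c :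
  (q *m (perm_mx s)^T) ord0 c = q ord0 (s c).
Proof. by rewrite tr_perm_mx -col_permE mxE. Qed.

Lemma perm_fix_cols (R : pzSemiRingType) m k (A : 'M[R]_(m, k)) (a c : 'I_k) :
  (forall i, A i a = A i c) -> A *m perm_mx (tperm a c) = A.
Proof.
move=> H; apply/matrixP => i x.
rewrite -[tperm a c]invgK -col_permE mxE tpermV.
by case: tpermP => [->|->|]; rewrite ?H.
Qed.

Lemma PAP_entry (R : numDomainType) n d0 l (X : 'M[R]_(n, d0)) s i c :
  PAP X s i (s c) = pad_mx l X i c.
Proof. exact: mul_perm_entry. Qed.

Lemma PAP_tperm (R : numDomainType) n d0 l (X : 'M[R]_(n, d0)) s (a c : 'I_(d0 + (l + l))) :
  (forall i, pad_mx l X i a = pad_mx l X i c) -> PAP X (tperm a c * s) = PAP X s.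
Proof. by move=> H; rewrite /PAP perm_mxM mulmxA perm_fix_cols. Qed.
Lemma meas_eq (R : realType) dm (Omega : measurableType dm) (f : Omega -> R)
  (mf : measurable_fun setT f) (v : R) : measurable [set w | f w = v].
Proof.
have := mf measurableT [set v] (measurable_set1 v); rewrite setTI; exact.
Qed.

Lemma agree_measurable (R : realType) dm (Omega : measurableType dm) m k
  (Y : 'M[R]_(m, k)) (q : Omega -> 'rV[R]_k)
  (qmeas : forall j, measurable_fun setT (fun w => q w ord0 j)) :
  measurable [set w | strongly_agrees (q w) Y].
Proof.
pose f (t : bool * 'I_k) w := q w ord0 t.2 == (if t.1 then 1 else -1).
have mf : forall t, measurable [set w | f t w].
  move=> t; have -> : [set w | f t w] = [set w | q w ord0 t.2 = (if t.1 then 1 else -1)].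
    by apply/seteqP; split => w /= /eqP.
  exact: meas_eq.
have := @fin_pattern_measurable _ _ _ f mf
  (fun g => forall b : R, b = 1 \/ b = -1 ->
    (9 / 10 : R) * (#|Jcols Y b|)%:R <= (#|[set j in Jcols Y b | g (b == 1, j)]|)%:R :> R).
suff -> : [set w | strongly_agrees (q w) Y] = [set w | forall b : R, b = 1 \/ b = -1 ->
    (9 / 10 : R) * (#|Jcols Y b|)%:R <= (#|[set j in Jcols Y b | [ffun t => f t w] (b == 1, j)]|)%:R :> R] by [].
have hn : (-1 : R) == 1 = false by rewrite lt_eqF // (@lt_trans _ _ 0) ?ltr01 ?ltrN10.
apply: eq_set => w; apply/propext; split => H b hb; have := H b hb;
  (suff -> : [set j in Jcols Y b | [ffun t => f t w] (b == 1, j)] =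
             [set j in Jcols Y b | q w ord0 j == b] by []);
  apply/setP => j; rewrite !inE ffunE /f /=;
  by case: hb => ->; rewrite ?eqxx ?hn.
Qed.
Lemma sum_indic_card (R : realType) k (K : {set 'I_k}) (P : pred 'I_k) :
  \sum_(c in K) (P c)%:R = (#|[set c in K | P c]|)%:R :> R.
Proof.
rewrite -sum1_card natr_sum [LHS]big_mkcond [RHS]big_mkcond; apply: eq_bigr => c _.
by rewrite !inE; case: (c \in K); case: (P c).
Qed.

Lemma lemA (R : realType) dm (Omega : measurableType dm) (mu : probability Omega R)
  m k (Y : 'M[R]_(m, k)) (q : Omega -> 'rV[R]_k)
  (qmeas : forall j, measurable_fun setT (fun w => q w ord0 j))
  (Hagree : mu [set w | strongly_agrees (q w) Y] = 1%E)
  (b : R) (hb : b = 1 \/ b = -1) (s : 'S_k) (K : {set 'I_k})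
  (HK : forall c, (c \in K) = (s c \in Jcols Y b)) :
  (((9 / 10) * (#|K|)%:R)%:E <= \sum_(c in K) mu [set w | q w ord0 (s c) = b])%E.
Proof.
set A := [set w | strongly_agrees (q w) Y].
have mA : measurable A by exact: agree_measurable.
pose E c := [set w | q w ord0 (s c) = b].
have mE c : measurable (E c) by exact: meas_eq.
apply: (@le_trans _ _ (\sum_(c in K) mu (E c `&` A))%E); last first.
  apply: lee_sum => c _; apply: le_measure.
  - by rewrite inE; exact: measurableI.
  - by rewrite inE; exact: mE.
  - by move=> x [].

have -> : (\sum_(c in K) mu (E c `&` A) =
   \int[mu]_(w in setT) (\sum_(c <- enum K) (\1_(E c `&` A) w)%:E))%E.
  have mi : forall c, measurable_fun setT (fun w => (\1_(E c `&` A) w)%:E : \bar R).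
    by move=> c; apply/measurable_EFinP; apply: measurable_indic; exact: measurableI.
  have pi : forall c w, setT w -> (0 <= (\1_(E c `&` A) w)%:E :> \bar R)%E.
    by move=> c w _; rewrite lee_fin indicE; case: (_ \in _).
  rewrite (ge0_integral_sum _ measurableT mi pi).
  rewrite big_enum; apply: eq_bigr => c _; rewrite integral_indic ?setIT //.
  exact: measurableI.
have <- : (\int[mu]_(w in setT) (((9 / 10) * (#|K|)%:R)%:E * (\1_A w)%:E) =
   ((9 / 10) * (#|K|)%:R)%:E)%E.
  have mi : measurable_fun setT (fun w => (\1_A w)%:E : \bar R).
    by apply/measurable_EFinP; apply: measurable_indic.
  have pi : forall w, setT w -> (0 <= (\1_A w)%:E :> \bar R)%E.
    by move=> w _; rewrite lee_fin indicE; case: (_ \in _).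
  have pk : (0 <= ((9 / 10) * (#|K|)%:R)%:E :> \bar R)%E.
    by rewrite lee_fin; apply: mulr_ge0 => //.
  rewrite (ge0_integralZl _ measurableT mi pi pk).
  have HA : mu A = 1%E := Hagree.
  rewrite integral_indic // setIT.
  by rewrite [X in (_ * X)%E](_ : _ = 1%E) ?mule1 //.
have p1 : forall w, setT w -> (0 <= ((9 / 10) * (#|K|)%:R)%:E * (\1_A w)%:E :> \bar R)%E.
  by move=> w _; rewrite -EFinM lee_fin; apply: mulr_ge0 => //; rewrite indicE; case: (_ \in _).
have m1 : measurable_fun setT (fun w => (((9 / 10) * (#|K|)%:R)%:E * (\1_A w)%:E)%E : \bar R).
  apply/(measurable_EFinP _ (fun w => ((9 / 10) * (#|K|)%:R) * (\1_A w))).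
  apply: measurable_funM => //; exact: measurable_indic.
have m2 : measurable_fun setT (fun w => \sum_(c <- enum K) (\1_(E c `&` A) w)%:E : \bar R).
  apply: emeasurable_sum => c; apply/measurable_EFinP; apply: measurable_indic; exact: measurableI.
apply: (ge0_le_integral mu measurableT p1 m1 m2).
move=> w _; rewrite sumEFin -EFinM lee_fin big_enum.
have [Aw|nAw] := pselect (A w); last first.
  rewrite indicE memNset // mulr0; apply: sumr_ge0 => c _; rewrite indicE; case: (_ \in _) => //.
rewrite indicE mem_set // mulr1.
rewrite (eq_bigr (fun c => (q w ord0 (s c) == b)%:R)); last first.
  move=> c _; rewrite indicE; case: eqP => h.
    by rewrite mem_set.
  by rewrite memNset // => -[].
rewrite sum_indic_card.
have H := Aw b hb.
have e1 : K = s @^-1: Jcols Y b by apply/setP => c; rewrite inE HK.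
have e2 : [set c in K | q w ord0 (s c) == b] = s @^-1: [set j in Jcols Y b | q w ord0 j == b].
  by apply/setP => c; rewrite !inE HK !inE.
by rewrite e2 card_preimset ?e1 ?card_preimset //; exact: perm_inj.
Qed.
Theorem lemma6p2 (R : realType) (l n d0 : nat)
  (dm : measure_display) (Omega : measurableType dm) (mu : probability Omega R)
  (X : 'M[R]_(n, d0)) (HX : pm1_mx X)
  (M : 'M[R]_(n, d0 + (l + l)) -> Omega -> 'rV[R]_(d0 + (l + l)))
  (Mmeas : forall Y j, measurable_fun setT (fun w => M Y w ord0 j))
  (Mrange : forall Y w j, -1 <= M Y w ord0 j <= 1)
  (Magree : forall s : 'S_(d0 + (l + l)),
     mu [set w | strongly_agrees (M (PAP X s) w) (PAP X s)] = 1%E) :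
  forall (b : R), (b = 1 \/ b = -1) ->
  forall j : 'I_d0, j \in Jcols X b ->
    ((9 / 10)%:E <=
     ((#|'S_(d0 + (l + l))|%:R)^-1)%:E *
       \sum_(s : 'S_(d0 + (l + l)))
          mu [set w | (M (PAP X s) w *m (perm_mx s)^T) ord0 (lshift (l + l) j) = b])%E.
Proof.
move=> b hb j hj.
set j' := lshift (l + l) j.
set K := Jcols (pad_mx l X) b.
have j'K : j' \in K.
  rewrite inE; apply/forallP => i; rewrite /pad_mx row_mxEl.
  by move: hj; rewrite inE => /forallP.
have colsK : forall c, c \in K -> forall i, pad_mx l X i j' = pad_mx l X i c.
  move=> c cK i; move: j'K cK; rewrite !inE => /forallP /(_ i) /eqP ->.
  by move=> /forallP /(_ i) /eqP ->.
have HK : forall (s : 'S_(d0 + (l + l))) c, (c \in K) = (s c \in Jcols (PAP X s) b).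
  by move=> s c; rewrite !inE; apply: eq_forallb => i; rewrite PAP_entry.
set m := fun (s : 'S_(d0 + (l + l))) c => fine (mu [set w | M (PAP X s) w ord0 (s c) = b]).
have mE : forall s c, mu [set w | M (PAP X s) w ord0 (s c) = b] = (m s c)%:E.
  move=> s c; rewrite /m fineK //; apply: fin_num_measure; exact: meas_eq.
have HG : forall s, mu [set w | (M (PAP X s) w *m (perm_mx s)^T) ord0 j' = b] = (m s j')%:E.
  move=> s; rewrite -mE; congr (mu _); apply: eq_set => w.
  by rewrite mul_trperm_entry.
rewrite (eq_bigr _ (fun s _ => HG s)) sumEFin -EFinM lee_fin.
have lemB : forall c, c \in K -> \sum_s m s j' = \sum_s m s c.
  move=> c cK; rewrite (reindex_inj (mulgI (tperm j' c))); apply: eq_bigr => s _.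
  by rewrite /m PAP_tperm ?permM ?tpermL //; exact: colsK.
have lemAr : forall s, 9 / 10 * (#|K|)%:R <= \sum_(c in K) m s c.
  move=> s; rewrite -lee_fin -sumEFin.
  rewrite (eq_bigr _ (fun c _ => esym (mE s c))).
  apply: (@lemA R dm Omega mu n _ (PAP X s) (M (PAP X s)) (Mmeas _) (Magree s) b hb s K (HK s)).
set S := \sum_s m s j'.
set N := #|'S_(d0 + (l + l))|.
have key : N%:R * (9 / 10 * (#|K|)%:R) <= S * (#|K|)%:R.
  have e : S *+ #|K| = \sum_(c in K) \sum_s m s c.
    by rewrite -sumr_const; apply: eq_bigr.
  rewrite (mulr_natr S) e exchange_big /=.
  have hs : \sum_(s : 'S_(d0 + (l + l))) (9 / 10 * (#|K|)%:R) = (9 / 10 * (#|K|)%:R) *+ N :> R.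
    by rewrite /N sumr_const.
  by rewrite mulr_natl -hs; apply: ler_sum => s _; exact: lemAr.
have Kpos : (0 : R) < (#|K|)%:R by rewrite ltr0n; apply/card_gt0P; exists j'.
have Npos : (0 : R) < N%:R by rewrite ltr0n; apply/card_gt0P; exists 1%g.
have key2 : N%:R * (9 / 10) <= S.
  by rewrite -(ler_pM2r Kpos) -mulrA.
rewrite -[X in X <= _](mulKf (lt0r_neq0 Npos)).
by apply: ler_wpM2l => //; rewrite invr_ge0 ltW.
Qed.
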